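(* Let $m\ge2$. For $p=1,\dots,m$ let $C^p=\bigoplus_{i=1}^sC^p_i$ be an orthogonal direct sum of finite-dimensional Hilbert spaces and $A^p\in\mathcal{L}(C^p)$ positive definite. Let $f_p\in\mathcal{H}_{A^p}\setminus\{0\}$, $p=1,\dots,m$. Then the simple tensor $f_1\otimes\cdots\otimes f_m\in\bigotimes_p\mathcal{H}_{A^p}$ is extremal if and only if there exists $i\in\{1,\dots,s\}$ such that $f_p\in A^p(C^p_i)$ for every $p=1,\dots,m$.
   Context: $\mathcal{H}_{A^p}$ is $C^p$ with inner product $\langle x,y\rangle=\langle (A^p)^{-1}x,y\rangle_{C^p}$. $\bigotimes_p\mathcal{H}_{A^p}$ is the Hilbert tensor product. Let $\phi^*:\bigotimes_p\mathcal{H}_{A^p}\to\bigoplus_{i=1}^sC^1_i\otimes\cdots\otimes C^m_i$ be the linear map with $\phi^*(f_1\otimes\cdots\otimes f_m)=(f_1(i)\otimes\cdots\otimes f_m(i))_{i=1}^s$, where $f(i)$ denotes the $C^p_i$-component of $f\in C^p$. Equip the range of $\phi^*$ with the range norm $\|\phi^*F\|=\inf\{\|G\|:\phi^*G=\phi^*F\}$ (this is the Hadamard product RKHS). An element $F$ is called extremal (for $m\ge2$) if $\|\phi^*F\|=\|F\|_{\bigotimes_p\mathcal{H}_{A^p}}$, equivalently $F\in(\ker\phi^* )^\perp$. *)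

(* Defs.v *)
From HB Require Import structures.
From mathcomp Require Import all_boot all_order all_algebra.
Set Implicit Arguments. Unset Strict Implicit. Unset Printing Implicit Defensive.
Import Order.TTheory GRing.Theory Num.Theory.
Local Open Scope ring_scope.

(* The Hilbert space C^p = (+)_{i<s} C^p_i is realized (up to a unitary
   isomorphism) as 'cV[C]_(n p) with the standard inner product
   <x,y> = \sum_k x_k (y_k)^*, and C^p_i is the coordinate subspace spanned by
   the basis vectors k with blk p k = i (blk : 'I_(n p) -> 'I_s). *)

Definition cdot (C : numClosedFieldType) n (u v : 'cV[C]_n) : C :=
  \sum_(k < n) u k 0 * (v k 0)^*.

Definition posdef (C : numClosedFieldType) n (A : 'M[C]_n) : Prop :=
  forall v : 'cV[C]_n, v != 0 -> 0 < cdot (A *m v) v.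

Definition inblock (C : numClosedFieldType) n s (blk : 'I_n -> 'I_s) (i : 'I_s)
  (v : 'cV[C]_n) : Prop := forall k, blk k != i -> v k 0 = 0.

Definition inimage (C : numClosedFieldType) n s (A : 'M[C]_n)
  (blk : 'I_n -> 'I_s) (i : 'I_s) (f : 'cV[C]_n) : Prop :=
  exists v : 'cV[C]_n, inblock blk i v /\ f = A *m v.

Definition tidx (m : nat) (n : 'I_m -> nat) : finType :=
  {dffun forall p : 'I_m, 'I_(n p)}.

(* elements of (x)_p C^p are coordinate functions on multi-indices *)
Definition tensor (C : numClosedFieldType) m (n : 'I_m -> nat) := tidx n -> C.

Definition stensor (C : numClosedFieldType) m (n : 'I_m -> nat)
  (f : forall p : 'I_m, 'cV[C]_(n p)) : tensor C n :=
  fun x => \prod_(p < m) f p (x p) 0.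

(* inner product of the Hilbert tensor product (x)_p H_{A^p}:
   <F, G> = < ((x)_p (A^p)^{-1}) F, G > *)
Definition tdot (C : numClosedFieldType) m (n : 'I_m -> nat)
  (A : forall p : 'I_m, 'M[C]_(n p)) (F G : tensor C n) : C :=
  \sum_(x : tidx n) \sum_(y : tidx n)
     (\prod_(p < m) invmx (A p) (x p) (y p)) * F y * (G x)^*.

Definition tnorm2 (C : numClosedFieldType) m (n : 'I_m -> nat)
  (A : forall p : 'I_m, 'M[C]_(n p)) (F : tensor C n) : C := tdot A F F.

(* phi^* F = (F restricted to C^1_i (x) ... (x) C^m_i)_{i<s}; the i-th
   component is represented as the tensor supported on the multi-indices
   x with blk p (x p) = i for all p. *)
Definition phistar (C : numClosedFieldType) m s (n : 'I_m -> nat)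
  (blk : forall p : 'I_m, 'I_(n p) -> 'I_s) (F : tensor C n) :
  'I_s -> tensor C n :=
  fun i x => if [forall p, blk p (x p) == i] then F x else 0.

(* extremal: ||phi^* F|| (range norm = inf { ||G|| : phi^* G = phi^* F })
   equals ||F||, i.e. F has minimal norm among all G with phi^* G = phi^* F
   (stated with squared norms). *)
Definition extremal (C : numClosedFieldType) m s (n : 'I_m -> nat)
  (A : forall p : 'I_m, 'M[C]_(n p)) (blk : forall p : 'I_m, 'I_(n p) -> 'I_s)
  (F : tensor C n) : Prop :=
  forall G : tensor C n, phistar blk G = phistar blk F -> tnorm2 A F <= tnorm2 A G.

(* Main.v *)
Require Import Defs.
From Stdlib Require ClassicalEpsilon FunctionalExtensionality.
From HB Require Import structures.
From mathcomp Require Import all_boot all_order all_algebra.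
From mathcomp Require Import sesquilinear spectral ring.
Import Order.TTheory GRing.Theory Num.Theory.
Local Open Scope ring_scope.

Lemma prod_sum_dffun (R : comNzRingType) m (n : 'I_m -> nat) (F : forall p : 'I_m, 'I_(n p) -> R) :
  \prod_(p < m) \sum_(j : 'I_(n p)) F p j = \sum_(x : tidx n) \prod_(p < m) F p (x p).
Proof.
pose P_ := fun p : 'I_m => [ffun j : 'I_(n p) => F p j].
transitivity (\prod_(p < m) \sum_(j in tagged_with (fun p => 'I_(n p)) p) untag 0 (P_ p) j).
  apply: eq_bigr => p _; rewrite -(big_tag (fun p => P_ p)).
  by apply: eq_bigr => j _; rewrite ffunE.
rewrite bigA_distr_big_dep.
rewrite -(big_fprod _ _ P_).
rewrite (reindex (@fprod_of_dffun _ (fun p => 'I_(n p)))); last first.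
  by apply/onW_bij/fprod_of_dffun_bij.
apply: eq_bigr => x _; apply: eq_bigr => p _.
by rewrite ffunE /fprod_of_dffun fprodE.
Qed.
Section Cdot.
Variable C : numClosedFieldType.
Variable n : nat.
Implicit Types u v w : 'cV[C]_n.

Lemma cdotDl u1 u2 v : cdot (u1 + u2) v = cdot u1 v + cdot u2 v.
Proof. by rewrite /cdot -big_split; apply: eq_bigr => k _; rewrite mxE mulrDl. Qed.
Lemma cdotDr u v1 v2 : cdot u (v1 + v2) = cdot u v1 + cdot u v2.
Proof. by rewrite /cdot -big_split; apply: eq_bigr => k _; rewrite mxE rmorphD mulrDr. Qed.
Lemma cdotZl c u v : cdot (c *: u) v = c * cdot u v.
Proof. by rewrite /cdot mulr_sumr; apply: eq_bigr => k _; rewrite mxE mulrA. Qed.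
Lemma cdotZr c u v : cdot u (c *: v) = c^* * cdot u v.
Proof. by rewrite /cdot mulr_sumr; apply: eq_bigr => k _; rewrite mxE rmorphM mulrCA. Qed.
Lemma cdot_delta u k : cdot u (delta_mx k 0) = u k 0.
Proof.
rewrite /cdot (bigD1 k) //= big1 => [|j /negbTE jk]; rewrite mxE ?eqxx ?jk /=.
  by rewrite conjC1 mulr1 addr0.
by rewrite conjC0 mulr0.
Qed.

Lemma posdef_real (A : 'M[C]_n) l : posdef A -> A l l \is Num.real.
Proof.
move=> hA; have : delta_mx l 0 != 0 :> 'cV[C]_n.
  by apply/eqP => /matrixP/(_ l 0); rewrite !mxE !eqxx /= => /eqP; rewrite oner_eq0.
move=> /hA /gtr0_real; by rewrite -colE cdot_delta mxE.
Qed.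

Lemma posdef_herm (A : 'M[C]_n) j k : posdef A -> A j k = (A k j)^*.
Proof.
move=> hA.
pose e l := delta_mx l 0 : 'cV[C]_n.
have q c : cdot (A *m (e j + c *: e k)) (e j + c *: e k) =
   A j j + c^* * A k j + c * A j k + c * c^* * A k k.
  rewrite mulmxDr -scalemxAr /e -!colE !(cdotDl, cdotDr, cdotZl, cdotZr) !cdot_delta !mxE.
  ring.
have Rj := posdef_real A j hA; have Rk := posdef_real A k hA.
case jk: (j == k); first by rewrite (eqP jk) conj_Creal // posdef_real.
have vn c : e j + c *: e k != 0.
  apply/eqP => /matrixP/(_ j 0); rewrite !mxE !eqxx jk /= mulr0 addr0 => /eqP.
  by rewrite oner_eq0.
have /gtr0_real/conj_Creal := hA _ (vn 1).
rewrite q conjC1 !mul1r !rmorphD /= (conj_Creal Rj) (conj_Creal Rk) => E1.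
have /gtr0_real/conj_Creal := hA _ (vn 'i).
rewrite q !rmorphD !rmorphM /= conjCi rmorphN /= conjCi opprK (conj_Creal Rj) (conj_Creal Rk) => E2.
have ii : 'i * 'i = -1 :> C by rewrite -expr2 sqrCi.
set a := A j k in E1 E2 *; set b := A k j in E1 E2 *.
have E1' : a^* + b^* - (a + b) = 0.
  move: E1; set L := (X in X = _); set R := (X in _ = X) => E1.
  transitivity (L - R); first by rewrite /L /R; ring.
  by rewrite E1 subrr.
have E2' : (- 'i * a^* + 'i * b^*) - ('i * a - 'i * b) = 0.
  move: E2; set L := (X in X = _); set R := (X in _ = X) => E2.
  transitivity (L - R); first by rewrite /L /R; ring.
  by rewrite E2 subrr.
have : (b^* - a) *+ 2 = 0.
  have -> : (b^* - a) *+ 2 = (a^* + b^* - (a + b)) - 'i * ((- 'i * a^* + 'i * b^*) - ('i * a - 'i * b))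
             - (1 + 'i * 'i) * (a^* - b^* + a - b) by ring.
  by rewrite E1' E2' ii addrN mulr0 mul0r !subr0.
by move/eqP; rewrite mulrn_eq0 /= subr_eq0 => /eqP.
Qed.

Lemma cdotE u v : cdot u v = ((map_mx Num.conj v^T) *m u) 0 0.
Proof. by rewrite /cdot mxE; apply: eq_bigr => k _; rewrite !mxE mulrC. Qed.

Lemma posdef_decomp (A : 'M[C]_n) : posdef A -> A \in unitmx /\
  exists (U : 'M[C]_n) (Y : 'I_n -> C), (forall k, 0 < Y k) /\
    forall a b, invmx A a b = \sum_k (U k a)^* * Y k * U k b.
Proof.
move=> hA.
have hAt : map_mx Num.conj A^T = A.
  by apply/matrixP => i j; rewrite !mxE (posdef_herm A i j hA).
have Anorm : A \is normalmx by apply/normalmxP; rewrite hAt.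
set P := spectralmx A; set X := spectral_diag A.
have PU : P \is unitarymx := spectral_unitarymx A.
have PPt : P *m map_mx Num.conj P^T = 1%:M by apply/unitarymxP.
have PtP : map_mx Num.conj P^T *m P = 1%:M by apply: mulmx1C.
have Aeq : A = map_mx Num.conj P^T *m diag_mx X *m P.
  by rewrite -invmx_unitary //; apply/orthomx_spectralP.
have D : P *m A *m map_mx Num.conj P^T = diag_mx X.
  by rewrite Aeq !mulmxA PPt mul1mx -!mulmxA PPt mulmx1.
have Xpos k : 0 < X 0 k.
  pose w := col k (map_mx Num.conj P^T).
  have wn : w != 0.
    apply/eqP => w0.
    have : P *m w = col k 1%:M by rewrite /w !colE mulmxA PPt.
    rewrite w0 mulmx0 => /matrixP/(_ k 0); rewrite !mxE eqxx => /eqP.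
    by rewrite eq_sym oner_eq0.
  have := hA _ wn.
  suff -> : cdot (A *m w) w = X 0 k by [].
  have wt : map_mx Num.conj w^T = row k P.
    by apply/matrixP => i j; rewrite !mxE conjCK.
  rewrite cdotE wt /w rowE colE !mulmxA -[_ *m P *m A]mulmxA.
  rewrite -[delta_mx 0 k *m (P *m A) *m _]mulmxA -[P *m A *m _]/(P *m A *m _) D.
  by rewrite -rowE -colE !mxE eqxx mulr1n.
pose Y k := (X 0 k)^-1.
pose B' := map_mx Num.conj P^T *m diag_mx (\row_k Y k) *m P.
have BA : B' *m A = 1%:M.
  rewrite /B' Aeq !mulmxA -[_ *m P *m map_mx Num.conj P^T]mulmxA PPt mulmx1.
  rewrite -[_ *m diag_mx (\row_k Y k) *m diag_mx X]mulmxA mulmx_diag.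
  have -> : diag_mx (\row_j ((\row_k Y k) 0 j * X 0 j)) = 1%:M.
    apply/matrixP => i j; rewrite !mxE /Y.
    case: (i == j); last by rewrite mulr0n.
    by rewrite mulr1n mulVf // (lt0r_neq0 (Xpos i)).
  by rewrite mulmx1.
have [_ Au] := mulmx1_unit BA.
split=> //; exists P, Y; split=> [k|a b]; first by rewrite invr_gt0.
have -> : invmx A = B'.
  by rewrite -[invmx A]mul1mx -BA -mulmxA mulmxV // mulmx1.
rewrite /B' mul_mx_diag !mxE; apply: eq_bigr => k _; rewrite !mxE.
by [].
Qed.
End Cdot.

Section Tensor.
Variable C : numClosedFieldType.
Variable m : nat.
Variable n : 'I_m -> nat.
Variable A : forall p : 'I_m, 'M[C]_(n p).
Implicit Types F G H K : tensor C n.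

Lemma tdot_ext F F' G G' : (forall x, F x = F' x) -> (forall x, G x = G' x) ->
  tdot A F G = tdot A F' G'.
Proof. by move=> eF eG; apply: eq_bigr => x _; apply: eq_bigr => y _; rewrite eF eG. Qed.

Lemma tdot_add2 F H :
  tdot A (fun x => F x + H x) (fun x => F x + H x) =
  tdot A F F + tdot A F H + tdot A H F + tdot A H H.
Proof.
rewrite /tdot -!big_split; apply: eq_bigr => x _; rewrite -!big_split.
by apply: eq_bigr => y _ /=; rewrite rmorphD; ring.
Qed.

Lemma tdot_scaler F K t : tdot A F (fun x => t * K x) = t^* * tdot A F K.
Proof.
rewrite /tdot mulr_sumr; apply: eq_bigr => x _; rewrite mulr_sumr.
by apply: eq_bigr => y _; rewrite rmorphM; ring.
Qed.

Lemma tdot_scalel F K t : tdot A (fun x => t * K x) F = t * tdot A K F.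
Proof.
rewrite /tdot mulr_sumr; apply: eq_bigr => x _; rewrite mulr_sumr.
by apply: eq_bigr => y _; ring.
Qed.

Hypothesis herm : forall p a b, (invmx (A p) a b)^* = invmx (A p) b a.

Lemma tdot_sym F G : tdot A G F = (tdot A F G)^*.
Proof.
rewrite /tdot rmorph_sum exchange_big; apply: eq_bigr => x _.
rewrite rmorph_sum; apply: eq_bigr => y _.
rewrite !rmorphM rmorph_prod /= (conjCK (G x)).
under [in RHS]eq_bigr do rewrite herm.
by ring.
Qed.

Lemma tdot_stensor f H : tdot A (stensor f) H =
  \sum_(x : tidx n) (\prod_(p < m) (invmx (A p) *m f p) (x p) 0) * (H x)^*.
Proof.
rewrite /tdot; apply: eq_bigr => x _; rewrite -mulr_suml; congr (_ * _).
under [in RHS]eq_bigr do rewrite mxE.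
rewrite prod_sum_dffun; apply: eq_bigr => y _.
by rewrite /stensor -big_split.
Qed.

Variable U : forall p : 'I_m, 'M[C]_(n p).
Variable Y : forall p : 'I_m, 'I_(n p) -> C.
Hypothesis Ypos : forall p k, 0 < Y p k.
Hypothesis Bdec : forall p a b, invmx (A p) a b = \sum_k (U p k a)^* * Y p k * U p k b.

Lemma tdot_ge0 H : 0 <= tdot A H H.
Proof.
pose V (k x : tidx n) := \prod_(p < m) U p (k p) (x p).
pose W (k : tidx n) := \prod_(p < m) Y p (k p).
have E1 (x y : tidx n) : \prod_(p < m) invmx (A p) (x p) (y p) = \sum_k W k * ((V k x)^* * V k y).
  under eq_bigr do rewrite Bdec.
  rewrite prod_sum_dffun; apply: eq_bigr => k _.
  rewrite /W /V rmorph_prod -!big_split /=; apply: eq_bigr => p _; ring.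
have -> : tdot A H H = \sum_k W k * ((\sum_y V k y * H y) * (\sum_y V k y * H y)^*).
  rewrite /tdot.
  transitivity (\sum_x \sum_y \sum_k W k * ((V k x)^* * V k y) * H y * (H x)^*).
    apply: eq_bigr => x _; apply: eq_bigr => y _.
    by rewrite E1 !mulr_suml.
  under eq_bigr do rewrite exchange_big.
  rewrite exchange_big; apply: eq_bigr => k _.
  rewrite rmorph_sum /= big_distrl /= mulr_sumr.
  rewrite exchange_big; apply: eq_bigr => y _.
  rewrite !mulr_sumr; apply: eq_bigr => x _.
  by rewrite rmorphM; ring.
apply: sumr_ge0 => k _; apply: mulr_ge0; last exact: mul_conjC_ge0.
by apply: prodr_ge0 => p _; apply: ltW.
Qed.

End Tensor.

Arguments tdot_ge0 {C m n A U Y}.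
Arguments tdot_ext {C m n} A F F' G G'.
Arguments tdot_sym {C m n A}.
Arguments tdot_stensor {C m n} A f H.
Arguments posdef_decomp {C n A}.
Arguments tdot_add2 {C m n} A F H.
Arguments tdot_scaler {C m n} A F K t.
Arguments tdot_scalel {C m n} A F K t.
Theorem mainTheorem7 (C : numClosedFieldType) (m s : nat) (n : 'I_m -> nat)
  (blk : forall p : 'I_m, 'I_(n p) -> 'I_s)
  (A : forall p : 'I_m, 'M[C]_(n p))
  (f : forall p : 'I_m, 'cV[C]_(n p)) :
  (2 <= m)%N ->
  (forall p, posdef (A p)) ->
  (forall p, f p != 0) ->
  extremal A blk (stensor f) <->
  exists i : 'I_s, forall p : 'I_m, inimage (A p) (blk p) i (f p).
Proof.
move=> m2 hA hf.
have ex p : {UY : 'M[C]_(n p) * ('I_(n p) -> C) | (forall k, 0 < UY.2 k) /\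
    forall a b, invmx (A p) a b = \sum_k (UY.1 k a)^* * UY.2 k * UY.1 k b}.
  apply: ClassicalEpsilon.constructive_indefinite_description.
  have [_ [U [Y [h1 h2]]]] := posdef_decomp (hA p).
  by exists (U, Y).
pose U p := (sval (ex p)).1; pose Y p := (sval (ex p)).2.
have Ypos p k : 0 < Y p k := (proj1 (svalP (ex p))) k.
have Bdec p a b : invmx (A p) a b = \sum_k (U p k a)^* * Y p k * U p k b :=
  proj2 (svalP (ex p)) a b.
have Au p : A p \in unitmx := (posdef_decomp (hA p)).1.
have herm p a b : (invmx (A p) a b)^* = invmx (A p) b a.
  rewrite !Bdec rmorph_sum; apply: eq_bigr => k _.
  rewrite !rmorphM /= (geC0_conj (ltW (Ypos p k))).
  rewrite (conjCK (U p k a)); ring.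
have Nge0 H := tdot_ge0 Ypos Bdec H.
pose g p := invmx (A p) *m f p.
have fg p : f p = A p *m g p by rewrite /g mulmxA mulmxV // mul1mx.
have gn p : g p != 0.
  apply: contra (hf p) => /eqP g0; by rewrite fg g0 mulmx0.
pose GG (x : tidx n) := \prod_(p < m) g p (x p) 0.
have TS H : tdot A (stensor f) H = \sum_x GG x * (H x)^* := tdot_stensor A f H.
split.
- move=> ext.
  have claim (x0 : tidx n) : GG x0 != 0 ->
      [forall p, forall q, blk p (x0 p) == blk q (x0 q)].
    move=> Gx0; apply/negPn/negP => nb.
    pose d (x : tidx n) : C := if x == x0 then 1 else 0.
    pose b0 := tdot A d d.
    have b0ge : 0 <= b0 := Nge0 d.
    have b1 : 0 < b0 + 1 by rewrite ltr_wpDl.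
    pose c := (b0 + 1)^-1.
    have cpos : 0 < c by rewrite invr_gt0.
    pose t := - (c * GG x0).
    pose H x := t * d x.
    have ph : phistar blk (fun x => stensor f x + H x) = phistar blk (stensor f).
      apply: FunctionalExtensionality.functional_extensionality => i.
      apply: FunctionalExtensionality.functional_extensionality => x.
      rewrite /phistar; case: ifP => // hall.
      case: (eqVneq x x0) => [exx|nx]; last by rewrite /H /d (negbTE nx) mulr0 addr0.
      exfalso; move/negP: nb; apply; apply/forallP => p; apply/forallP => q.
      by move/forallP: hall => hall; rewrite -exx (eqP (hall p)) (eqP (hall q)).
    have := ext _ ph; rewrite /tnorm2 tdot_add2.
    have FH : tdot A (stensor f) H = t^* * GG x0.
      rewrite tdot_scaler TS (bigD1 x0) //= big1 => [|x nx].
        by rewrite /d eqxx conjC1 mulr1 addr0.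
      by rewrite /d (negbTE nx) conjC0 mulr0.
    have HF : tdot A H (stensor f) = t * (GG x0)^*.
      by rewrite (tdot_sym herm) FH rmorphM /= conjCK.
    have HH : tdot A H H = t * t^* * b0.
      by rewrite tdot_scalel tdot_scaler mulrA.
    rewrite FH HF HH -!addrA lerDl.
    have cc : c^* = c by rewrite geC0_conj // ltW.
    set a := GG x0 * (GG x0)^*.
    have apos : 0 < a by rewrite mul_conjC_gt0.
    have -> : t^* * GG x0 + (t * (GG x0)^* + t * t^* * b0) = (c * a) * (c * b0 - 2).
      by rewrite /t rmorphN rmorphM /= cc /a; ring.
    have cb : c * b0 <= 1 by rewrite ler_pdivrMl // mulr1 lerDl ler01.
    have : c * b0 - 2 < 0.
      rewrite subr_lt0; apply: (le_lt_trans cb).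
      by rewrite -[1]/(1%:R) ltr_nat.
    by rewrite -(pmulr_rlt0 _ (mulr_gt0 cpos apos)) => /lt_geF ->.
  have kex p : exists k, g p k 0 != 0.
    apply/existsP; apply: contraR (gn p) => /existsPn hk.
    apply/eqP/matrixP => a b; rewrite (ord1 b); move: (hk a); rewrite negbK => /eqP ->; by rewrite mxE.
  pose k0 p := xchoose (kex p).
  have k0P p : g p (k0 p) 0 != 0 := xchooseP (kex p).
  pose x0 : tidx n := finfun k0.
  have x0E p : x0 p = k0 p by rewrite ffunE.
  have p0lt : (0 < m)%N by apply: leq_trans m2.
  pose p0 := Ordinal p0lt; pose p1 := Ordinal m2.
  have Gx0 : GG x0 != 0 by apply/prodf_neq0 => p _; rewrite x0E.
  have c0 := claim x0 Gx0.
  exists (blk p0 (k0 p0)) => p.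
  exists (g p); split; last exact: fg p.
  move=> k hk; apply/eqP; apply: contraTT hk => gk; rewrite negbK.
  pose x1 : tidx n := finfun (@dfwith _ (fun q => 'I_(n q)) k0 p k).
  have Gx1 : GG x1 != 0.
    apply/prodf_neq0 => q _; rewrite /x1 ffunE; case: dfwithP => [|q' _]; [exact: gk | exact: k0P].
  have c1 := claim x1 Gx1.
  pose q := if p == p0 then p1 else p0.
  have hq : p != q.
    rewrite /q; have [ep|np] := eqVneq p p0.
      by rewrite ep.
    by rewrite (negbTE np).
  move/forallP/(_ p)/forallP/(_ q): c1 => /eqP; rewrite /x1 !ffunE dfwith_in dfwith_out // => ->.
  by move/forallP/(_ q)/forallP/(_ p0): c0; rewrite !x0E.
- move=> [i hi] G' ph.
  have gin p k : blk p k != i -> g p k 0 = 0.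
    have [v [vin fv]] := hi p.
    by move=> hk; rewrite /g fv mulKmx // vin.
  pose H x := G' x - stensor f x.
  have Hz x : GG x != 0 -> H x = 0.
    move=> /prodf_neq0 hx.
    have hall : [forall p, blk p (x p) == i].
      apply/forallP => p; have := hx p isT; apply: contraR => hb.
      by rewrite gin ?eqxx.
    have := congr1 (fun F => F i x) ph; rewrite /phistar hall => e.
    by rewrite /H e subrr.
  have FH : tdot A (stensor f) H = 0.
    rewrite TS big1 // => x _.
    case: (eqVneq (GG x) 0) => [->|/Hz ->]; by rewrite ?mul0r ?conjC0 ?mulr0.
  have HF : tdot A H (stensor f) = 0 by rewrite (tdot_sym herm) FH conjC0.
  rewrite /tnorm2 (tdot_ext A G' (fun x => stensor f x + H x) G' (fun x => stensor f x + H x));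
    try by move=> x; rewrite /H addrC subrK.
  by rewrite tdot_add2 FH HF !addr0 lerDl.
Qed.
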